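(* Let $A\overset{i}{\to}U\overset{j}{\to}S$ be an extension of a semilattice of groups $A$ by an inverse semigroup $S$, and suppose $S$ is an $F$-inverse monoid. Then there exists an order-preserving transversal $\rho$ of $j$.
   Context: A semilattice of groups is an inverse semigroup whose idempotents are central. An extension of $A$ by $S$ is an inverse semigroup $U$ with a monomorphism $i:A\to U$ and an idempotent-separating epimorphism $j:U\to S$ with $i(A)=j^{-1}(E(S))$. A transversal of $j$ is a map $\rho:S\to U$ with $j\circ\rho=\mathrm{id}_S$ and $\rho(E(S))\subseteq E(U)$; it is order-preserving if $s\le t$ implies $\rho(s)\le\rho(t)$ (natural partial orders). An $F$-inverse monoid is an inverse semigroup in which every class of the minimum group congruence $\sigma$ ($(s,t)\in\sigma$ iff $es=et$ for some idempotent $e$) has a maximum element. *)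

(* Defs.v *)
Record InverseSemigroup := {
  carrier :> Type;
  mul : carrier -> carrier -> carrier;
  mul_assoc : forall x y z, mul x (mul y z) = mul (mul x y) z;
  unique_inverse : forall x, exists! y, mul (mul x y) x = x /\ mul (mul y x) y = y
}.

Arguments mul {_} _ _.

Definition idempotent {S : InverseSemigroup} (e : S) : Prop := mul e e = e.

Definition nat_le {S : InverseSemigroup} (s t : S) : Prop :=
  exists e : S, idempotent e /\ s = mul e t.

Definition semilattice_of_groups (S : InverseSemigroup) : Prop :=
  forall e s : S, idempotent e -> mul e s = mul s e.

Definition is_hom {S T : InverseSemigroup} (f : S -> T) : Prop :=
  forall x y : S, f (mul x y) = mul (f x) (f y).

Definition is_mono {S T : InverseSemigroup} (f : S -> T) : Prop :=
  is_hom f /\ forall x y, f x = f y -> x = y.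

Definition is_epi {S T : InverseSemigroup} (f : S -> T) : Prop :=
  is_hom f /\ forall y, exists x, f x = y.

Definition idempotent_separating {S T : InverseSemigroup} (f : S -> T) : Prop :=
  forall e e' : S, idempotent e -> idempotent e' -> f e = f e' -> e = e'.

Definition is_extension (A U S : InverseSemigroup) (i : A -> U) (j : U -> S) : Prop :=
  is_mono i /\ is_epi j /\ idempotent_separating j /\
  (forall u : U, (exists a : A, i a = u) <-> idempotent (j u)).

Definition sigma_rel {S : InverseSemigroup} (s t : S) : Prop :=
  exists e : S, idempotent e /\ mul e s = mul e t.

Definition F_inverse (S : InverseSemigroup) : Prop :=
  forall s : S, exists m : S, sigma_rel m s /\
    forall t : S, sigma_rel t s -> nat_le t m.

Definition is_transversal {U S : InverseSemigroup} (j : U -> S) (rho : S -> U) : Prop :=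
  (forall s, j (rho s) = s) /\ (forall s : S, idempotent s -> idempotent (rho s)).

Definition order_preserving {S U : InverseSemigroup} (rho : S -> U) : Prop :=
  forall s t : S, nat_le s t -> nat_le (rho s) (rho t).

(* Main.v *)
Require Import Defs.
From Stdlib Require Import ClassicalEpsilon Classical.

Local Notation "x ⋅ y" := (mul x y) (at level 40, left associativity).

Ltac assoc := rewrite ?mul_assoc; reflexivity.

Lemma choice_fun {X Y : Type} (P : X -> Y -> Prop) :
  (forall x, exists y, P x y) -> exists f, forall x, P x (f x).
Proof.
  intros H. exists (fun x => proj1_sig (constructive_indefinite_description _ (H x))).
  intro x. exact (proj2_sig (constructive_indefinite_description _ (H x))).
Qed.

Section IS.
Variable S : InverseSemigroup.

Definition inv_sig (x : S) := constructive_indefinite_description _ (unique_inverse S x).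
Definition inv (x : S) : S := proj1_sig (inv_sig x).

Lemma inv_spec (x : S) : x ⋅ inv x ⋅ x = x /\ inv x ⋅ x ⋅ inv x = inv x.
Proof. unfold inv. exact (proj1 (proj2_sig (inv_sig x))). Qed.

Lemma inv_uniq (x y : S) : x ⋅ y ⋅ x = x -> y ⋅ x ⋅ y = y -> y = inv x.
Proof.
  intros H1 H2. unfold inv. symmetry. apply (proj2 (proj2_sig (inv_sig x))). split; auto.
Qed.

Lemma inv_l (x : S) : x ⋅ inv x ⋅ x = x. Proof. apply inv_spec. Qed.
Lemma inv_r (x : S) : inv x ⋅ x ⋅ inv x = inv x. Proof. apply inv_spec. Qed.

Lemma inv_inv (x : S) : inv (inv x) = x.
Proof. symmetry; apply inv_uniq; [apply inv_r | apply inv_l]. Qed.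

Lemma idem_inv (e : S) : idempotent e -> inv e = e.
Proof. intros H; symmetry; apply inv_uniq; unfold idempotent in H; rewrite !H; reflexivity. Qed.

Lemma idem_mul (e f : S) : idempotent e -> idempotent f -> idempotent (e ⋅ f).
Proof.
  intros He Hf. unfold idempotent in *.
  set (x := inv (e ⋅ f)).
  assert (Hx1 : e⋅f⋅x⋅(e⋅f) = e⋅f) by exact (inv_l (e⋅f)).
  assert (Hx2 : x⋅(e⋅f)⋅x = x) by exact (inv_r (e⋅f)).
  assert (Hy : f⋅x⋅e = x).
  { apply inv_uniq.
    - transitivity (e⋅(f⋅f)⋅x⋅(e⋅e)⋅f); [assoc|]. rewrite He, Hf.
      transitivity (e⋅f⋅x⋅(e⋅f)); [assoc|]. exact Hx1.
    - transitivity (f⋅(x⋅(e⋅e)⋅(f⋅f)⋅x)⋅e); [assoc|]. rewrite He, Hf.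
      transitivity (f⋅(x⋅(e⋅f)⋅x)⋅e); [assoc|]. rewrite Hx2. reflexivity. }
  assert (Hxx : x⋅x = x).
  { transitivity (f⋅x⋅e⋅(f⋅x⋅e)); [rewrite Hy; reflexivity|].
    transitivity (f⋅(x⋅(e⋅f)⋅x)⋅e); [assoc|]. rewrite Hx2. exact Hy. }
  assert (Hef : e⋅f = x).
  { rewrite <- (idem_inv x Hxx). unfold x. symmetry. apply inv_inv. }
  rewrite Hef. exact Hxx.
Qed.

Lemma idem_comm (e f : S) : idempotent e -> idempotent f -> e ⋅ f = f ⋅ e.
Proof.
  intros He Hf. pose proof (idem_mul e f He Hf) as Hef.
  transitivity (inv (e⋅f)). symmetry; apply idem_inv; auto.
  symmetry; apply inv_uniq; unfold idempotent in *.
  - transitivity (e⋅(f⋅f)⋅(e⋅e)⋅f); [assoc|]. rewrite He, Hf.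
    transitivity (e⋅f⋅(e⋅f)); [assoc|]. exact Hef.
  - transitivity (f⋅(e⋅e)⋅(f⋅f)⋅e); [assoc|]. rewrite He, Hf.
    transitivity (f⋅(e⋅f)⋅e); [assoc|]. 
    pose proof (idem_mul f e Hf He) as Hfe. unfold idempotent in Hfe.
    transitivity (f⋅e⋅(f⋅e)); [assoc|]. exact Hfe.
Qed.

Lemma idem_xx (x : S) : idempotent (x ⋅ inv x).
Proof. unfold idempotent. transitivity (x⋅inv x⋅x⋅inv x); [assoc|]. rewrite inv_l; reflexivity. Qed.

Lemma idem_xx' (x : S) : idempotent (inv x ⋅ x).
Proof. unfold idempotent. transitivity (inv x⋅x⋅inv x⋅x); [assoc|]. rewrite inv_r; reflexivity. Qed.

Lemma inv_mul (x y : S) : inv (x ⋅ y) = inv y ⋅ inv x.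
Proof.
  symmetry; apply inv_uniq.
  - transitivity (x⋅((y⋅inv y)⋅(inv x⋅x))⋅y); [assoc|].
    rewrite (idem_comm _ _ (idem_xx y) (idem_xx' x)).
    transitivity (x⋅inv x⋅x⋅(y⋅inv y⋅y)); [assoc|]. rewrite (inv_l x), (inv_l y). reflexivity.
  - transitivity (inv y⋅((inv x⋅x)⋅(y⋅inv y))⋅inv x); [assoc|].
    rewrite (idem_comm _ _ (idem_xx' x) (idem_xx y)).
    transitivity (inv y⋅y⋅inv y⋅(inv x⋅x⋅inv x)); [assoc|]. rewrite (inv_r x), (inv_r y). reflexivity.
Qed.

Lemma le_ss (s t e : S) : idempotent e -> s = e ⋅ t -> s ⋅ inv s = e ⋅ (t ⋅ inv t).
Proof.
  intros He Hs. subst s. rewrite inv_mul, (idem_inv e He).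
  transitivity (e⋅((t⋅inv t)⋅e)); [assoc|].
  rewrite (idem_comm _ _ (idem_xx t) He).
  transitivity (e⋅e⋅(t⋅inv t)); [assoc|]. unfold idempotent in He. rewrite He; reflexivity.
Qed.

Lemma le_ssm (s t : S) : nat_le s t -> s ⋅ inv s ⋅ t = s.
Proof.
  intros [e [He Hs]]. rewrite (le_ss s t e He Hs). rewrite Hs.
  transitivity (e⋅(t⋅inv t⋅t)); [assoc|]. rewrite inv_l. reflexivity.
Qed.

Lemma le_ss2 (s t : S) : nat_le s t -> s ⋅ inv s ⋅ (t ⋅ inv t) = s ⋅ inv s.
Proof.
  intros [e [He Hs]]. rewrite (le_ss s t e He Hs).
  transitivity (e⋅((t⋅inv t)⋅(t⋅inv t))); [assoc|]. rewrite (idem_xx t). reflexivity.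
Qed.

Lemma le_antisym (a b : S) : nat_le a b -> nat_le b a -> a = b.
Proof.
  intros H1 H2. pose proof (le_ssm a b H1) as H1'. pose proof (le_ssm b a H2) as H2'.
  transitivity (a⋅inv a⋅(b⋅inv b⋅a)). rewrite H2'; symmetry; exact H1'.
  transitivity (b⋅inv b⋅(a⋅inv a⋅a)).
  - transitivity ((a⋅inv a⋅(b⋅inv b))⋅a); [assoc|].
    rewrite (idem_comm _ _ (idem_xx a) (idem_xx b)). assoc.
  - rewrite (inv_l a). exact H2'.
Qed.

Lemma sigma_trans (a b c : S) : sigma_rel a b -> sigma_rel b c -> sigma_rel a c.
Proof.
  intros [e [He Hea]] [f [Hf Hfb]]. exists (e⋅f). split. apply idem_mul; auto.
  transitivity (f⋅(e⋅a)). rewrite (idem_comm e f He Hf); assoc.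
  rewrite Hea. transitivity (e⋅(f⋅b)).
  transitivity ((f⋅e)⋅b); [assoc|]. rewrite <- (idem_comm e f He Hf); assoc.
  rewrite Hfb; assoc.
Qed.

Lemma sigma_sym (a b : S) : sigma_rel a b -> sigma_rel b a.
Proof. intros [e [He H]]. exists e. auto. Qed.

Lemma sigma_refl (a : S) : sigma_rel a a.
Proof. exists (a ⋅ inv a). split; [apply idem_xx|reflexivity]. Qed.

Lemma le_sigma (s t : S) : nat_le s t -> sigma_rel s t.
Proof.
  intros [e [He Hs]]. exists e. split; auto. rewrite Hs.
  transitivity (e⋅e⋅t); [assoc|]. unfold idempotent in He. rewrite He; reflexivity.
Qed.

Lemma max_idem (m e : S) : idempotent e -> sigma_rel m e ->
  (forall t, sigma_rel t e -> nat_le t m) -> idempotent m.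
Proof.
  intros He [g [Hg Hgm]] Hmax.
  assert (Hgmi : idempotent (g⋅m)) by (rewrite Hgm; apply idem_mul; auto).
  assert (Hinv : inv m ⋅ g = g ⋅ m).
  { rewrite <- (idem_inv g Hg) at 1. rewrite <- inv_mul. apply idem_inv; auto. }
  assert (Hs : sigma_rel (m ⋅ inv m) e).
  { exists g. split; auto.
    transitivity (g⋅(m⋅inv m)⋅g).
    - transitivity (g⋅((m⋅inv m)⋅g)); [|assoc].
      rewrite (idem_comm _ _ (idem_xx m) Hg).
      transitivity (g⋅g⋅(m⋅inv m)); [|assoc]. unfold idempotent in Hg. rewrite Hg. reflexivity.
    - transitivity ((g⋅m)⋅(inv m⋅g)); [assoc|]. rewrite Hinv. rewrite Hgmi. exact Hgm. }
  pose proof (le_ssm _ _ (Hmax _ Hs)) as H.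
  rewrite (idem_inv _ (idem_xx m)) in H. rewrite (idem_xx m) in H.
  rewrite (inv_l m) in H.
  pose proof (idem_xx m) as HH. rewrite <- H in HH. exact HH.
Qed.

End IS.

Arguments inv {S} x.

Lemma hom_inv {U S : InverseSemigroup} (j : U -> S) : is_hom j ->
  forall u, j (inv u) = inv (j u).
Proof.
  intros Hj u. apply inv_uniq.
  - rewrite <- !Hj. rewrite inv_l. reflexivity.
  - rewrite <- !Hj. rewrite inv_r. reflexivity.
Qed.

Theorem proposition3p26 (A U S : InverseSemigroup) (i : A -> U) (j : U -> S) :
  is_extension A U S i j ->
  semilattice_of_groups A ->
  F_inverse S ->
  exists rho : S -> U, is_transversal j rho /\ order_preserving rho.
Proof.
  intros [Hi [[Hj Hjs] [Hsep Hiff]]] HA HFi.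
  assert (Hlift : forall e : S, idempotent e -> exists f : U, idempotent f /\ j f = e).
  { intros e He. destruct (Hjs e) as [u Hu]. exists (u ⋅ inv u). split.
    apply idem_xx. rewrite Hj, (hom_inv j Hj), Hu, (idem_inv _ e He). exact He. }
  destruct (choice_fun (fun (s : S) (f : U) => idempotent f /\ j f = s ⋅ inv s))
    as [F HFs].
  { intro s. apply Hlift, idem_xx. }
  destruct (choice_fun (fun (s m : S) => sigma_rel m s /\
        forall t : S, sigma_rel t s -> nat_le t m) HFi) as [M HMs].
  destruct (choice_fun (fun (m : S) (u : U) => j u = m /\ (idempotent m -> idempotent u)))
    as [W HWs].
  { intro m. destruct (classic (idempotent m)) as [Hm|Hm].
    - destruct (Hlift m Hm) as [f [Hf Hjf]]. exists f. auto.
    - destruct (Hjs m) as [u Hu]. exists u. split; auto. intro; contradiction. }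
  assert (le_M : forall s, nat_le s (M s)).
  { intro s. apply (proj2 (HMs s)). apply sigma_refl. }
  assert (M_eq : forall s t, nat_le s t -> M s = M t).
  { intros s t Hst. apply le_antisym.
    - apply (proj2 (HMs t)). apply sigma_trans with s. apply (proj1 (HMs s)). apply le_sigma; auto.
    - apply (proj2 (HMs s)). apply sigma_trans with t. apply (proj1 (HMs t)).
      apply sigma_sym, le_sigma; auto. }
  exists (fun s => F s ⋅ W (M s)). split; [split|].
  - intro s. cbv beta. rewrite Hj, (proj2 (HFs s)), (proj1 (HWs (M s))).
    apply le_ssm. apply le_M.
  - intros s Hs. cbv beta. apply idem_mul. apply (proj1 (HFs s)).
    apply (proj2 (HWs (M s))). apply (max_idem _ (M s) s Hs (proj1 (HMs s)) (proj2 (HMs s))).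
  - intros s t Hst. cbv beta. exists (F s). split; [apply (proj1 (HFs s))|].
    rewrite (M_eq s t Hst).
    assert (Hff : F s ⋅ F t = F s).
    { apply Hsep. apply idem_mul; [apply (proj1 (HFs s))|apply (proj1 (HFs t))].
      apply (proj1 (HFs s)).
      rewrite Hj, (proj2 (HFs s)), (proj2 (HFs t)). apply le_ss2; auto. }
    rewrite mul_assoc, Hff. reflexivity.
Qed.
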